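(* Let $X$ be a real Banach space, $x\in S_X$, $\delta\ge0$ and $0<t_1<t_2$. Then (1) $Q_{B_X}(t_2x,\delta)\subseteq Q_{B_X}(t_1x,\delta)\subseteq Q_{B_X}(t_2x,\frac{t_2}{t_1}\delta)$; (2) $Q_{S_X}(t_2x,\delta)\subseteq Q_{S_X}(t_1x,\delta)\subseteq Q_{S_X}(t_2x,\frac{t_2}{t_1}\delta)$.
   Context: $B_X,S_X$ are the closed unit ball and unit sphere. For non-empty bounded $F$ and $y\in X$, $r(F,y)=\sup_{z\in F}\|y-z\|$ and $Q_F(y,\delta)=\{z\in F:\|y-z\|\ge r(F,y)-\delta\}$. *)

(* Defs.v *)
From HB Require Import structures.
From mathcomp Require Import all_boot all_order all_algebra.
From mathcomp Require Import all_classical all_reals all_analysis.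
Set Implicit Arguments. Unset Strict Implicit. Unset Printing Implicit Defensive.
Import Order.TTheory GRing.Theory Num.Theory.
Import numFieldNormedType.Exports.
Local Open Scope classical_set_scope.
Local Open Scope ring_scope.

(* A real Banach space is a completeNormedModType over R : realType. *)

Definition unit_ball (R : realType) (X : normedModType R) : set X :=
  [set z | `|z| <= 1].
Definition unit_sphere (R : realType) (X : normedModType R) : set X :=
  [set z | `|z| = 1].

Definition farthest_rad (R : realType) (X : normedModType R) (F : set X) (y : X) : R :=
  sup [set `|y - z| | z in F].

Definition Qset (R : realType) (X : normedModType R) (F : set X) (y : X) (delta : R) : set X :=
  [set z | F z /\ farthest_rad F y - delta <= `|y - z|].

(* Main.v *)
Require Import Defs.
From HB Require Import structures.
From mathcomp Require Import all_boot all_order all_algebra.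
From mathcomp Require Import all_classical all_reals all_analysis.
From mathcomp Require Import ring lra.
Import Order.TTheory GRing.Theory Num.Theory.
Import numFieldNormedType.Exports.
Local Open Scope classical_set_scope.
Local Open Scope ring_scope.

Lemma rad_eq (R : realType) (X : normedModType R) (F : set X) (x : X) (t : R) :
  `|x| = 1 -> F `<=` @unit_ball R X -> F (- x) -> 0 <= t ->
  farthest_rad F (t *: x) = t + 1.
Proof.
move=> nx HF Fx t0.
have ub : ubound [set `|t *: x - z| | z in F] (t + 1).
  move=> _ [z Fz <-]; apply: le_trans (ler_normB _ _) _.
  rewrite normrZ nx mulr1 ger0_norm //; apply: lerD => //; exact: HF.
have mem : [set `|t *: x - z| | z in F] (t + 1).
  exists (- x) => //; rewrite opprK -{2}(scale1r x) -scalerDl normrZ nx mulr1.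
  by rewrite ger0_norm // addr_ge0.
apply/le_anti; rewrite /farthest_rad; apply/andP; split.
  by apply: ge_sup => //; exists (t + 1).
by apply: sup_upper_bound => //; split; [exists (t + 1) | exists (t + 1)].
Qed.

Lemma gen (R : realType) (X : normedModType R) (F : set X) (x : X)
  (delta t1 t2 : R) :
  `|x| = 1 -> F `<=` @unit_ball R X -> F (- x) -> 0 <= delta -> 0 < t1 -> t1 < t2 ->
  Qset F (t2 *: x) delta `<=` Qset F (t1 *: x) delta /\
  Qset F (t1 *: x) delta `<=` Qset F (t2 *: x) (t2 / t1 * delta).
Proof.
move=> nx HF Fx d0 t10 t12.
have t20 : 0 < t2 by apply: lt_trans t12.
rewrite /Qset !rad_eq //; try exact: ltW.
split=> z [Fz Hz]; split=> //.
- have h : `|t2 *: x - z| <= `|t1 *: x - z| + `|(t2 - t1) *: x|.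
    have -> : t2 *: x - z = (t1 *: x - z) + (t2 - t1) *: x.
      by rewrite scalerBl [RHS]addrC addrA subrK.
    exact: ler_normD.
  rewrite normrZ nx mulr1 gtr0_norm ?subr_gt0 // in h.
  lra.
- have hz : `|z| <= 1 by exact: HF.
  have e : t1 *: x - z = (t1 / t2) *: (t2 *: x - z) + (1 - t1 / t2) *: (- z).
    rewrite scalerBr scalerA mulfVK ?gt_eqF //.
    by rewrite scalerBl scale1r scalerN opprK addrA addrAC subrK.
  have h : `|t1 *: x - z| <= t1 / t2 * `|t2 *: x - z| + (1 - t1 / t2).
    rewrite e; apply: le_trans (ler_normD _ _) _.
    have p : 0 <= t1 / t2 by rewrite divr_ge0 ?ltW.
    rewrite !normrZ normrN -normrM (ger0_norm p).
    have q : 0 <= 1 - t1 / t2 by rewrite subr_ge0 ler_pdivrMr // mul1r ltW.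
    rewrite (ger0_norm q); apply: lerD => //.
    by rewrite -[X in _ <= X]mulr1; apply: ler_wpM2l.
  have h2 : t1 / t2 * (t2 + 1 - t2 / t1 * delta) = t1 + t1 / t2 - delta.
    by field; apply/andP; split; rewrite gt_eqF.
  have h3 : t1 / t2 * (t2 + 1 - t2 / t1 * delta) <= t1 / t2 * `|t2 *: x - z|.
    rewrite h2; lra.
  by rewrite ler_pM2l ?divr_gt0 // in h3.
Qed.

Theorem lemma2p13 (R : realType) (X : completeNormedModType R) (x : X)
  (delta t1 t2 : R) :
  @unit_sphere R X x -> 0 <= delta -> 0 < t1 -> t1 < t2 ->
  (Qset (@unit_ball R X) (t2 *: x) delta `<=` Qset (@unit_ball R X) (t1 *: x) delta /\
   Qset (@unit_ball R X) (t1 *: x) delta `<=` Qset (@unit_ball R X) (t2 *: x) (t2 / t1 * delta)) /\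
  (Qset (@unit_sphere R X) (t2 *: x) delta `<=` Qset (@unit_sphere R X) (t1 *: x) delta /\
   Qset (@unit_sphere R X) (t1 *: x) delta `<=` Qset (@unit_sphere R X) (t2 *: x) (t2 / t1 * delta)).
Proof.
rewrite /unit_sphere /= => nx d0 t10 t12; split; apply: gen => //.
- by rewrite /unit_ball /= normrN nx.
- by move=> z; rewrite /unit_sphere /unit_ball /= => ->.
- by rewrite /unit_sphere /= normrN.
Qed.
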